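(* Let $X$ be a topological space and $U,V\subset X$ path-connected open subsets with $X=U\cup V$, such that $U\cap V$ has $m+1$ path-connected components $A_0,A_1,\dots,A_m$, $m\ge 1$. Let $a_i\in A_i$ for each $i$ and $Y=\{a_0,a_1,\dots,a_m\}$, and let $G$ be a group. Then the square of restriction maps $H^1(X,Y)\xrightarrow{r_U}H^1(U,Y)\xrightarrow{r_{U\cap V}}H^1(U\cap V,Y)$, $H^1(X,Y)\xrightarrow{r_V}H^1(V,Y)\xrightarrow{r_{U\cap V}}H^1(U\cap V,Y)$ is commutative and cartesian (i.e. $(r_U,r_V)$ is a bijection from $H^1(X,Y)$ onto the fibered product of $H^1(U,Y)$ and $H^1(V,Y)$ over $H^1(U\cap V,Y)$). Moreover there is a canonical bijection between $H^1(U\cap V,Y)$ and $\prod_i H^1(A_i,a_i)$, given by restricting to the components $A_i$.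
   Context: Conventions: a path in $W$ is a continuous map $[0,1]\to W$; $P(W)$ is the set of paths; $p\cdot q$ is concatenation; homotopies of paths are relative to $\{0,1\}$, $\sim$ denotes homotopy. $G$ has unit $1$. For $Y\subset W$: a $0$-cochain of $(W,Y)$ is $c\colon W\to G$ with $c|_Y=1$, forming a group $C^0(W,Y)$ under pointwise multiplication. A $1$-cochain is $u\colon P(W)\to G$ with $u(p)=1$ for paths in $Y$; a cocycle satisfies $u(p)=u(q)$ if $p\sim q$ and $u(p\cdot q)=u(p)u(q)$ when defined. $C^0(W,Y)$ acts on cocycles by $(c\bullet u)(p)=c(p(0))u(p)c(p(1))^{-1}$; $H^1(W,Y)$ is the orbit set; $(W,b)=(W,\{b\})$. For $S\subset W$, $r_S\colon H^1(W,Y)\to H^1(S,Y\cap S)$ is induced by restricting cocycles to paths in $S$. *)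

(* Defs.v *)
From HB Require Import structures.
From mathcomp Require Import all_boot all_order all_algebra.
From mathcomp Require Import all_classical all_reals topology normedtype.
From mathcomp Require Import monoid.
Import numFieldNormedType.Exports.
Set Implicit Arguments. Unset Strict Implicit. Unset Printing Implicit Defensive.
Import Order.TTheory GRing.Theory Num.Theory.
Local Open Scope classical_set_scope.
Local Open Scope ring_scope.

Section NonAbelianH1.
Variables (R : realType) (X : topologicalType) (G : groupType).

Local Notation I01 := ([set x : R | 0 <= x <= 1]).

(* a path in W : a map [0,1] -> W, represented by a function R -> X that is
   continuous on [0,1] (subspace topology) and maps [0,1] into W. *)
Definition is_path (W : set X) (p : R -> X) : Prop :=
  {within I01, continuous p} /\ (forall s, I01 s -> W (p s)).

Definition path_homotopic (W : set X) (p q : R -> X) : Prop :=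
  is_path W p /\ is_path W q /\
  exists H : R * R -> X,
    {within I01 `*` I01, continuous H} /\
    (forall st, (I01 `*` I01) st -> W (H st)) /\
    (forall s, I01 s -> H (s, 0) = p s) /\
    (forall s, I01 s -> H (s, 1) = q s) /\
    (forall t, I01 t -> H (0, t) = p 0) /\
    (forall t, I01 t -> H (1, t) = p 1).

(* concatenation p . q (meaningful when p 1 = q 0) *)
Definition path_concat (p q : R -> X) : R -> X :=
  fun s => if (s <= 2^-1) then p (2 * s) else q (2 * s - 1).

Definition cocycle (W Y : set X) (u : (R -> X) -> G) : Prop :=
  (forall p, is_path (W `&` Y) p -> u p = one) /\
  (forall p q, path_homotopic W p q -> u p = u q) /\
  (forall p q, is_path W p -> is_path W q -> p 1 = q 0 ->
     u (path_concat p q) = mul (u p) (u q)).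

Definition cochain0 (W Y : set X) (c : X -> G) : Prop :=
  forall x, W x -> Y x -> c x = one.

(* two cocycles of (W,Y) define the same class in H^1(W,Y), i.e. lie in the
   same orbit of the action (c . u)(p) = c(p(0)) u(p) c(p(1))^-1 *)
Definition cohomologous (W Y : set X) (u v : (R -> X) -> G) : Prop :=
  exists c : X -> G, cochain0 W Y c /\
    forall p, is_path W p -> v p = mul (mul (c (p 0)) (u p)) (inv (c (p 1))).

Definition path_connected (W : set X) : Prop :=
  W !=set0 /\
  forall x y, W x -> W y -> exists p, is_path W p /\ p 0 = x /\ p 1 = y.

Definition path_components_of (S : set X) n (A : 'I_n -> set X) : Prop :=
  (forall i, A i `<=` S) /\ (forall i, A i !=set0) /\
  (forall i j, i != j -> A i `&` A j = set0) /\
  (forall x y, S x -> S y ->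
     ((exists p, is_path S p /\ p 0 = x /\ p 1 = y) <->
      exists i, A i x /\ A i y)).

End NonAbelianH1.

(* Main.v *)
Require Import Defs.
From HB Require Import structures.
From mathcomp Require Import all_boot all_order all_algebra.
From mathcomp Require Import all_classical all_reals topology normedtype.
From mathcomp Require Import monoid.
From mathcomp Require Import ring lra.
Import numFieldNormedType.Exports.
Import Order.TTheory GRing.Theory Num.Theory.
Set Implicit Arguments. Unset Strict Implicit.
Local Open Scope classical_set_scope.
Local Open Scope ring_scope.

Lemma within_comp (T1 T2 T3 : topologicalType) (A : set T1) (B : set T2) (F : T1 -> T2) (K : T2 -> T3) :
  continuous F -> (forall x, A x -> B (F x)) -> {within B, continuous K} -> {within A, continuous (K \o F)}.
Proof.
move=> cF AB /subspace_continuousP cK; apply/subspace_continuousP => x Ax.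
apply: (cvg_comp _ _ _ (cK _ (AB _ Ax))).
move=> W; rewrite /= !nbhs_simpl /within => h.
have := cF x _ h; rewrite nbhs_simpl /=.
by apply: filterS => y hy Ay; apply: hy; apply: AB.
Qed.

Section Main.
Variables (R : realType) (X : topologicalType) (G : groupType).
Local Notation I01 := ([set x : R | 0 <= x <= 1]).

Definition box (a b c d : R) : set (R * R) :=
  [set x : R | a <= x <= b] `*` [set y : R | c <= y <= d].

Lemma cont_aff (a b : R) : continuous (fun s : R => a + b * s).
Proof.
move=> s; apply: cvgD; first exact: cvg_cst.
apply: cvgM; [exact: cvg_cst | exact: cvg_id].
Qed.

Lemma cont_pair (f g : R -> R) : continuous f -> continuous g ->
  continuous (fun s => (f s, g s)).
Proof. by move=> cf cg s; apply: (@cvg_pair _ _ _ _ _ _ _ _ _ f g (cf s) (cg s)). Qed.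

Lemma cont_pair2 (f g : R * R -> R) : continuous f -> continuous g ->
  continuous (fun s => (f s, g s)).
Proof. by move=> cf cg s; apply: (@cvg_pair _ _ _ _ _ _ _ _ _ f g (cf s) (cg s)). Qed.

Lemma cont_interp (g1 g2 : R -> R) : continuous g1 -> continuous g2 ->
  continuous (fun z : R * R => (1 - z.2) * g1 z.1 + z.2 * g2 z.1).
Proof.
move=> c1 c2 z; apply: cvgD; apply: cvgM.
- apply: cvgB; first exact: cvg_cst. exact: cvg_snd.
- apply: cvg_comp; [exact: cvg_fst | exact: c1].
- exact: cvg_snd.
- apply: cvg_comp; [exact: cvg_fst | exact: c2].
Qed.

Lemma is_path_of (W : set X) a b c d (K : R * R -> X) (g h : R -> R) :
  {within box a b c d, continuous K} -> (forall z, box a b c d z -> W (K z)) ->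
  continuous g -> continuous h ->
  (forall s, I01 s -> a <= g s <= b /\ c <= h s <= d) ->
  is_path W (fun s => K (g s, h s)).
Proof.
move=> cK KW cg ch gh; split.
  have := @within_comp _ _ _ I01 (box a b c d) (fun s => (g s, h s)) K (cont_pair cg ch).
  by apply => // s /gh.
by move=> s /gh ?; apply: KW.
Qed.

Lemma convex_in (a b x y t : R) : a <= x <= b -> a <= y <= b -> 0 <= t <= 1 ->
  a <= (1 - t) * x + t * y <= b.
Proof. move=> /andP[? ?] /andP[? ?] /andP[? ?]; apply/andP; split; nra. Qed.

Lemma homot_box (W : set X) a b c d (K : R * R -> X) (g1 h1 g2 h2 : R -> R) :
  {within box a b c d, continuous K} -> (forall z, box a b c d z -> W (K z)) ->
  continuous g1 -> continuous h1 -> continuous g2 -> continuous h2 ->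
  (forall s, I01 s -> a <= g1 s <= b /\ c <= h1 s <= d) ->
  (forall s, I01 s -> a <= g2 s <= b /\ c <= h2 s <= d) ->
  g1 0 = g2 0 -> h1 0 = h2 0 -> g1 1 = g2 1 -> h1 1 = h2 1 ->
  path_homotopic W (fun s => K (g1 s, h1 s)) (fun s => K (g2 s, h2 s)).
Proof.
move=> cK KW c1 d1 c2 d2 gh1 gh2 e0 f0 e1 f1.
split; first exact: (is_path_of cK KW c1 d1 gh1).
split; first exact: (is_path_of cK KW c2 d2 gh2).
pose F := fun z : R * R => ((1 - z.2) * g1 z.1 + z.2 * g2 z.1, (1 - z.2) * h1 z.1 + z.2 * h2 z.1).
have FB : forall z, (I01 `*` I01) z -> box a b c d (F z).
  case=> s t [/= Is It]; have [g1s h1s] := gh1 s Is.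
  have [g2s h2s] := gh2 s Is.
  by split => /=; apply: convex_in.
exists (K \o F); split.
  apply: (within_comp _ FB cK); apply: cont_pair2; exact: cont_interp.
split; first by move=> z Iz; exact: (KW _ (FB z Iz)).
split; first by move=> s _; rewrite /F /=; congr (K (_, _)); ring.
split; first by move=> s _; rewrite /F /=; congr (K (_, _)); ring.
split; first by move=> t _; rewrite /F /= -e0 -f0; congr (K (_, _)); ring.
by move=> t _; rewrite /F /= -e1 -f1; congr (K (_, _)); ring.
Qed.



Definition seg (K : R * R -> X) (x y x' y' : R) : R -> X :=
  fun s => K (x + (x' - x) * s, y + (y' - y) * s).

Definition gam (x0 x1 x2 s : R) : R :=
  (x0 + (x1 - x0) * (2 * Num.min s 2^-1) + (x2 - x1) * (2 * Num.max (s - 2^-1) 0))%R.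

Lemma concat_seg (K : R * R -> X) x0 y0 x1 y1 x2 y2 :
  path_concat (seg K x0 y0 x1 y1) (seg K x1 y1 x2 y2) =
  (fun s => K (gam x0 x1 x2 s, gam y0 y1 y2 s)).
Proof.
apply: funext => s; rewrite /path_concat /seg /gam.
case: leP => h.
  have h' : (s - 2^-1 <= 0)%R by rewrite subr_le0.
  rewrite (max_idPr h'); congr (K (_, _)); ring.
have h1 : (2^-1 <= s)%R by apply: ltW.
have h2 : (0 <= s - 2^-1)%R by rewrite subr_ge0.
by rewrite (max_idPl h2); congr (K (_, _)); field.
Qed.

Lemma cont_gam x0 x1 x2 : continuous (gam x0 x1 x2).
Proof.
move=> s; apply: cvgD; [apply: cvgD|]; first exact: cvg_cst.
- apply: cvgM; first exact: cvg_cst.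
  apply: cvgM; first exact: cvg_cst.
  have := @continuous_min R R (fun s => s) (fun _ => 2^-1) s cvg_id (cvg_cst _); exact.
- apply: cvgM; first exact: cvg_cst.
  apply: cvgM; first exact: cvg_cst.
  have := @continuous_max R R (fun s => s - 2^-1) (fun _ => 0) s (cvgB cvg_id (cvg_cst _)) (cvg_cst _); exact.
Qed.

Lemma gam0 x0 x1 x2 : gam x0 x1 x2 0 = x0.
Proof.
rewrite /gam (min_idPl _); last by rewrite invr_ge0 ler0n.
rewrite (max_idPr _); last by rewrite sub0r oppr_le0 invr_ge0 ler0n.
ring.
Qed.

Lemma gam1 x0 x1 x2 : gam x0 x1 x2 1 = x2.
Proof.
have h : (2^-1 <= 1 :> R)%R by rewrite invf_le1 ?ler1n ?ltr0n.
rewrite /gam (min_idPr h) (max_idPl _); last by rewrite subr_ge0.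
by field.
Qed.

Lemma gam_in (a b x0 x1 x2 s : R) : (a <= x0 <= b -> a <= x1 <= b -> a <= x2 <= b ->
  0 <= s <= 1 -> a <= gam x0 x1 x2 s <= b)%R.
Proof.
move=> /andP[? ?] /andP[? ?] /andP[? ?] /andP[? ?]; rewrite /gam.
case: (leP s 2^-1) => h.
  have h' : (s - 2^-1 <= 0)%R by rewrite subr_le0.
  rewrite (max_idPr h') mulr0 mulr0 addr0.
  have : (2 * s <= 1)%R by rewrite -ler_pdivlMl ?ltr0n // mulr1.
  move=> ?; apply/andP; split; nra.
have h1 : (2^-1 <= s)%R by apply: ltW.
have h2 : (0 <= s - 2^-1)%R by rewrite subr_ge0.
rewrite (max_idPl h2) mulrBr mulfV ?pnatr_eq0 //.
have : (2 * s - 1 <= 1)%R by lra.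
have : (0 <= 2 * s - 1)%R by lra.
move=> ? ?; apply/andP; split; nra.
Qed.

Lemma seg_path (W : set X) a b c d (K : R * R -> X) x y x' y' :
  {within box a b c d, continuous K} -> (forall z, box a b c d z -> W (K z)) ->
  box a b c d (x, y) -> box a b c d (x', y') -> is_path W (seg K x y x' y').
Proof.
move=> cK KW [/= /andP[? ?] /andP[? ?]] [/= /andP[? ?] /andP[? ?]].
have := is_path_of cK KW (@cont_aff x (x' - x)) (@cont_aff y (y' - y)); apply.
move=> s /andP[? ?]; split; apply/andP; split; nra.
Qed.

Local Open Scope group_scope.
Lemma ginv_eq (g : G) : g = g * g -> g = 1.
Proof. by move=> h; apply: (mulgI g); rewrite mulg1 -h. Qed.

Section Coc.
Variables (W Y : set X) (u : (R -> X) -> G).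
Hypothesis cu : cocycle W Y u.

Lemma coc_const a b c d (K : R * R -> X) x y :
  {within box a b c d, continuous K} -> (forall z, box a b c d z -> W (K z)) ->
  box a b c d (x, y) -> u (seg K x y x y) = 1.
Proof.
move=> cK KW bxy; have P := seg_path cK KW bxy bxy.
apply: ginv_eq; have [_ [_ cc]] := cu.
rewrite -cc //; last by rewrite /seg; congr (K (_, _)); ring.
congr (u _); apply: funext => s; rewrite /path_concat /seg.
by case: ifP => _; congr (K (_, _)); ring.
Qed.

Lemma coc_box a b c d (K : R * R -> X) x0 y0 x1 y1 x2 y2 q r :
  {within box a b c d, continuous K} -> (forall z, box a b c d z -> W (K z)) ->
  box a b c d (x0, y0) -> box a b c d (x1, y1) -> box a b c d (x2, y2) ->
  box a b c d (q, r) ->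
  u (seg K x0 y0 x1 y1) * u (seg K x1 y1 x2 y2) =
  u (seg K x0 y0 q r) * u (seg K q r x2 y2).
Proof.
move=> cK KW b0 b1 b2 bq; have [_ [hom cc]] := cu.
rewrite -!cc; try (by apply: seg_path);
  try (by rewrite /seg; congr (K (_, _)); ring).
rewrite !concat_seg; apply: hom.
move: b0 b1 b2 bq => [/= ? ?] [/= ? ?] [/= ? ?] [/= ? ?].
apply: (homot_box cK KW); try exact: cont_gam; try by rewrite !gam0.
- by move=> s Is; split; apply: gam_in.
- by move=> s Is; split; apply: gam_in.
- by rewrite !gam1.
- by rewrite !gam1.
Qed.

Lemma coc_ext (p q : R -> X) : is_path W p -> (forall s, I01 s -> p s = q s) ->
  u p = u q.
Proof.
move=> [cp pW] pq; have [_ [hom _]] := cu; apply: hom.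
have cq : {within I01, continuous q}.
  by apply: (subspace_eq_continuous _ cp) => s /set_mem /pq.
split; first by [].
split; first by split => // s Is; rewrite -pq //; apply: pW.
exists (fun z => p z.1); split.
  have := @within_comp _ _ _ (I01 `*` I01) I01 fst p _ _ cp; apply.
    by move=> z; apply: cvg_fst.
  by move=> z [].
split; first by move=> z [? _]; apply: pW.
split; first by [].
split; first by move=> s Is; apply: pq.
by split.
Qed.

End Coc.

Definition pk (p : R -> X) : R * R -> X := fun z => p z.1.
Definition pt (a b : R) (m i : nat) : R := (a + i%:R * ((b - a) / m%:R))%R.
Fixpoint prodg (n : nat) (f : nat -> G) : G :=
  if n is k.+1 then prodg k f * f k else 1.

Lemma pk_cont (p : R -> X) a b c d : {within I01, continuous p} ->
  (0 <= a)%R -> (b <= 1)%R -> {within box a b c d, continuous (pk p)}.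
Proof.
move=> cp a0 b1; have := @within_comp _ _ _ (box a b c d) I01 fst p _ _ cp; apply.
  by move=> z; apply: cvg_fst.
move=> z [/= /andP[? ?] _]; apply/andP; split; lra.
Qed.

Lemma pk_W (W : set X) (p : R -> X) a b c d : (forall s, (a <= s <= b)%R -> W (p s)) ->
  forall z, box a b c d z -> W (pk p z).
Proof. by move=> h z [/= ? _]; apply: h. Qed.

Lemma pt0 a b m : pt a b m 0 = a.
Proof. by rewrite /pt mul0r addr0. Qed.

Lemma ptm a b m : (0 < m)%N -> pt a b m m = b.
Proof. by move=> m0; rewrite /pt; field; rewrite pnatr_eq0 -lt0n. Qed.

Lemma pt_le a b m i j : (a <= b)%R -> (i <= j)%N -> (pt a b m i <= pt a b m j)%R.
Proof.
move=> ab ij; rewrite /pt lerD2l; apply: ler_wpM2r; last by rewrite ler_nat.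
by apply: divr_ge0; [rewrite subr_ge0 | apply: ler0n].
Qed.

Lemma pt_in a b m i : (0 < m)%N -> (a <= b)%R -> (i <= m)%N -> (a <= pt a b m i <= b)%R.
Proof.
move=> m0 ab im; apply/andP; split.
  by rewrite -{1}(pt0 a b m); apply: pt_le.
by rewrite -{2}(ptm a b m0); apply: pt_le.
Qed.

Section Coc1.
Variables (W Y : set X) (u : (R -> X) -> G).
Hypothesis cu : cocycle W Y u.

Lemma coc_split (p : R -> X) a b c : {within I01, continuous p} ->
  (0 <= a)%R -> (a <= b)%R -> (b <= c)%R -> (c <= 1)%R ->
  (forall s, (a <= s <= c)%R -> W (p s)) ->
  u (seg (pk p) a 0 c 0) = u (seg (pk p) a 0 b 0) * u (seg (pk p) b 0 c 0).
Proof.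
move=> cp a0 ab bc c1 pW.
have cK := @pk_cont p a c 0 0 cp a0 c1.
have KW := @pk_W W p a c 0 0 pW.
have bx : forall x, (a <= x <= c)%R -> box a c 0 0 (x, 0) by move=> x ?; split => //=; rewrite lexx.
rewrite (coc_box cu cK KW (bx a _) (bx b _) (bx c _) (bx c _)); first last.
- by apply/andP; split; [apply: le_trans bc|].
- by apply/andP; split; [apply: le_trans bc|].
- by apply/andP.
- by apply/andP; split; [|apply: le_trans bc].
by rewrite (coc_const cu cK KW (bx c _)) ?mulg1 //; apply/andP; split; [apply: le_trans bc|].
Qed.

Lemma coc_subdiv (p : R -> X) a b m : {within I01, continuous p} ->
  (0 < m)%N -> (0 <= a)%R -> (a <= b)%R -> (b <= 1)%R ->
  (forall s, (a <= s <= b)%R -> W (p s)) ->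
  u (seg (pk p) a 0 b 0) =
  prodg m (fun i => u (seg (pk p) (pt a b m i) 0 (pt a b m i.+1) 0)).
Proof.
move=> cp m0 a0 ab b1 pW.
suff H : forall k, (k <= m)%N -> u (seg (pk p) a 0 (pt a b m k) 0) =
  prodg k (fun i => u (seg (pk p) (pt a b m i) 0 (pt a b m i.+1) 0)).
  by rewrite -H // ptm.
elim=> [_|k IH km] /=.
  rewrite pt0; apply: (coc_const cu (@pk_cont p a b 0 0 cp a0 b1) (@pk_W W p a b 0 0 pW)).
  by split; rewrite /= ?lexx ?ab.
have /andP[? ?] : (a <= pt a b m k <= b)%R by apply: pt_in => //; apply: ltnW.
have /andP[? ?] : (a <= pt a b m k.+1 <= b)%R by apply: pt_in.
rewrite -IH; last by apply: ltnW.
apply: coc_split => //.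
- by apply: pt_le => //.
- by apply: le_trans b1.
- by move=> s /andP[? ?]; apply: pW; apply/andP; split; lra.
Qed.

End Coc1.
Local Open Scope ring_scope.
Lemma nbhs_rect (x : R * R) (S : set (R * R)) : nbhs x S ->
  exists2 e : R, 0 < e & forall w : R * R, `|x.1 - w.1| < e -> `|x.2 - w.2| < e -> S w.
Proof.
case=> -[A B] /= [nA nB] AB.
move: nA => /nbhs_ballP [e1 e1p h1]; move: nB => /nbhs_ballP [e2 e2p h2].
exists (Num.min e1 e2); first by rewrite lt_min e1p e2p.
move=> w w1 w2; apply: AB; split.
  by apply: h1; rewrite -ball_normE /ball_ /=; apply: lt_le_trans w1 _; rewrite ge_min lexx.
by apply: h2; rewrite -ball_normE /ball_ /=; apply: lt_le_trans w2 _; rewrite ge_min lexx orbT.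
Qed.
Lemma nbhs_rect_inv (x : R * R) (e : R) : 0 < e ->
  nbhs x [set w : R * R | `|x.1 - w.1| < e /\ `|x.2 - w.2| < e].
Proof.
move=> e0; exists ([set w | `|x.1 - w| < e], [set w | `|x.2 - w| < e]) => /=.
  split; apply/nbhs_ballP; exists e => //= w; rewrite -ball_normE /ball_ /= => h; exact h.
by move=> w [].
Qed.
Lemma near_oo_inv (e : R) : 0 < e -> \forall n \near \oo, n.+1%:R^-1 < e.
Proof.
move=> e0; exists (Num.truncn e^-1) => // n /= hn.
have h1 : e^-1 < n.+1%:R.
  apply: lt_le_trans (truncnS_gt _) _; rewrite ler_nat; exact: hn.
rewrite -(invrK e) ltf_pV2 ?posrE ?ltr0n ?invr_gt0 //.
Qed.
Lemma near_oo_ex (P : nat -> Prop) : (\forall n \near \oo, P n) -> exists n, P n.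
Proof. case=> N _ h; exists N; apply: h => /=. done. Qed.

Definition tn (n k : nat) : R := pt 0 1 n k.

Lemma tnS n k : (0 < n)%N -> tn n k.+1 = (tn n k + n%:R^-1)%R.
Proof. by move=> n0; rewrite /tn /pt -addn1 natrD; field; rewrite pnatr_eq0 -lt0n. Qed.

Lemma tn_in n k : (0 < n)%N -> (k <= n)%N -> (0 <= tn n k <= 1)%R.
Proof. by move=> n0 kn; apply: pt_in. Qed.

Lemma lebesgue2 (U V : set X) (H : R * R -> X) : open U -> open V -> U `|` V = setT ->
  {within I01 `*` I01, continuous H} ->
  exists n, (0 < n)%N /\ forall k j, (k < n)%N -> (j < n)%N ->
    (forall z, box (tn n k) (tn n k.+1) (tn n j) (tn n j.+1) z -> U (H z)) \/
    (forall z, box (tn n k) (tn n k.+1) (tn n j) (tn n j.+1) z -> V (H z)).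
Proof.
move=> oU oV UV cH.
set K := I01 `*` I01.
have cptK : compact K.
  have := compact_setX (@segment_compact R 0 1) (@segment_compact R 0 1).
  by rewrite set_itvcc.
pose Q (O : set X) (n : nat) (z : R * R) := forall w, K w ->
  (`|z.1 - w.1| <= n.+1%:R^-1)%R -> (`|z.2 - w.2| <= n.+1%:R^-1)%R -> O (H w).
have nc := (near_covering_withinP K).2 ((compact_near_coveringP K).1 cptK).
have claim : forall x, K x -> forall O, open O -> O (H x) ->
    \forall x' \near x & i \near \oo, K x' -> Q O i x'.
  move=> x Kx O oO Ox.
  have := (subspace_continuousP _ _).1 cH x Kx O (open_nbhs_nbhs (conj oO Ox)).
  rewrite /= nbhs_simpl /within => /nbhs_rect [e e0 he].
  have e20 : (0 < e / 2)%R by rewrite divr_gt0 ?ltr0n.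
  exists ([set x' : R * R | `|x.1 - x'.1| < e / 2 /\ `|x.2 - x'.2| < e / 2]%R,
          [set i : nat | i.+1%:R^-1 < e / 2]%R).
    by split; [exact: nbhs_rect_inv | exact: near_oo_inv].
  move=> [x' i] [/= [h1 h2] hi] _ w Kw w1 w2.
  apply: (he w) => //.
    apply: le_lt_trans (ler_distD x'.1 _ _) _.
    by rewrite [e in _ < e](splitr e); apply: ltrD h1 (le_lt_trans w1 hi).
  apply: le_lt_trans (ler_distD x'.2 _ _) _.
  by rewrite [e in _ < e](splitr e); apply: ltrD h2 (le_lt_trans w2 hi).
have hyp : forall x, K x ->
    \forall x' \near x & i \near \oo, K x' -> (Q U i x' \/ Q V i x').
  move=> x Kx; have : (U `|` V) (H x) by rewrite UV.
  case=> [Ux|Vx]; [move: (claim x Kx U oU Ux) | move: (claim x Kx V oV Vx)];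
    apply: filterS => -[x' i] /= h Kx'; [left|right]; exact: h.
have [N hN] := near_oo_ex (nc nat \oo _ _ hyp).
exists N.+1; split => // k j kn jn.
have z0K : K (tn N.+1 k, tn N.+1 j) by split; apply: tn_in => //; apply: ltnW.
have sq : forall z, box (tn N.+1 k) (tn N.+1 k.+1) (tn N.+1 j) (tn N.+1 j.+1) z ->
    K z /\ `|tn N.+1 k - z.1| <= N.+1%:R^-1 /\ `|tn N.+1 j - z.2| <= N.+1%:R^-1.
  move=> z [/= /andP[a1 a2] /andP[b1 b2]].
  have /andP[k0 _] := tn_in (ltn0Sn N) (ltnW kn).
  have /andP[_ k1] := tn_in (ltn0Sn N) kn.
  have /andP[j0 _] := tn_in (ltn0Sn N) (ltnW jn).
  have /andP[_ j1] := tn_in (ltn0Sn N) jn.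
  move: a2 b2 k1 j1; rewrite !tnS // => a2 b2 k1 j1.
  split; first by split; apply/andP; split;
    [exact: le_trans a1 | exact: le_trans a2 k1 | exact: le_trans b1 | exact: le_trans b2 j1].
  rewrite distrC ger0_norm ?subr_ge0 // distrC ger0_norm ?subr_ge0 //.
  by split; rewrite lerBlDl.
case: (hN _ z0K) => h; [left|right] => z /sq [Kz [d1 d2]]; exact: h.
Qed.

Lemma is_path_ext (W : set X) (p q : R -> X) : is_path W p ->
  (forall s, I01 s -> p s = q s) -> is_path W q.
Proof.
move=> [cp pW] e; split; last by move=> s Is; rewrite -e //; apply: pW.
by apply: (subspace_eq_continuous _ cp) => s /set_mem /e.
Qed.

Lemma seg_pk_path (W : set X) (p : R -> X) x y : {within I01, continuous p} ->
  0 <= x -> x <= y -> y <= 1 -> (forall s, x <= s <= y -> W (p s)) ->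
  is_path W (seg (pk p) x 0 y 0).
Proof.
move=> cp x0 xy y1 pW.
apply: (seg_path (@pk_cont p x y 0 0 cp x0 y1) (@pk_W W p x y 0 0 pW)).
- by split; rewrite /= ?lexx ?xy.
- by split; rewrite /= ?lexx ?xy.
Qed.

Lemma tn_le n i j : (i <= j)%N -> tn n i <= tn n j.
Proof. by move=> ij; apply: pt_le => //; apply: ler01. Qed.

Lemma tnE n k : tn n k = k%:R / n%:R.
Proof. by rewrite /tn /pt subr0 add0r mulrA mulr1. Qed.

Lemma tn_refine n m k i : (0 < n)%N -> (0 < m)%N ->
  pt (tn n k) (tn n k.+1) m i = tn (n * m) (k * m + i).
Proof.
move=> n0 m0; rewrite /pt !tnE -addn1 !natrD !natrM.
by field; rewrite !pnatr_eq0 -!lt0n n0 m0.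
Qed.

Lemma prodg_ext n (f g : nat -> G) : (forall k, (k < n)%N -> f k = g k) ->
  prodg n f = prodg n g.
Proof.
elim: n => [//|n IH] h /=; rewrite IH ?h //.
by move=> k kn; apply: h; apply: ltnW.
Qed.

Lemma prodg_add a b (f : nat -> G) :
  prodg (a + b) f = (prodg a f * prodg b (fun j => f (a + j)%N))%g.
Proof.
elim: b => [|b IH] /=; first by rewrite addn0 mulg1.
by rewrite addnS /= IH mulgA.
Qed.

Lemma prodg_mul n m (f : nat -> G) :
  prodg (n * m) f = prodg n (fun k => prodg m (fun i => f (k * m + i)%N)).
Proof.
elim: n => [|n IH]; first by rewrite mul0n.
by rewrite mulSnr prodg_add IH.
Qed.


Lemma closed_cc (a b : R) : closed [set x : R | a <= x <= b].
Proof.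
rewrite (_ : [set x : R | a <= x <= b] = [set x | a <= x] `&` [set x | x <= b]).
  by apply: closedI; [exact: closed_ge | exact: closed_le].
by apply/seteqP; split => x /=; [move=> /andP[] | move=> [] ? ?; apply/andP].
Qed.

Lemma concat_l (p q : R -> X) s : s <= 2^-1 -> path_concat p q s = p (2 * s).
Proof. by move=> h; rewrite /path_concat h. Qed.

Lemma concat_r (p q : R -> X) s : p 1 = q 0 -> 2^-1 <= s ->
  path_concat p q s = q (2 * s - 1).
Proof.
move=> e h; rewrite /path_concat; case: ifP => // h'.
have -> : s = 2^-1 by apply/eqP; rewrite eq_le h' h.
by rewrite mulfV ?pnatr_eq0 // subrr.
Qed.

Lemma seg_in (a b s : R) : a <= b -> 0 <= s <= 1 -> a <= a + (b - a) * s <= b.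
Proof.
move=> ab /andP[s0 s1]; apply/andP; split.
  by rewrite lerDl; apply: mulr_ge0 => //; rewrite subr_ge0.
by rewrite -lerBrDl -[X in _ <= X]mulr1; apply: ler_wpM2l => //; rewrite subr_ge0.
Qed.

Lemma concat_cont (p q : R -> X) : {within I01, continuous p} ->
  {within I01, continuous q} -> p 1 = q 0 ->
  {within I01, continuous (path_concat p q)}.
Proof.
move=> cp cq e.
have -> : I01 = [set x : R | 0 <= x <= 2^-1] `|` [set x : R | 2^-1 <= x <= 1].
  apply/seteqP; split => x /=.
    move=> /andP[x0 x1]; case: (leP x 2^-1) => h; [left|right]; apply/andP; split => //.
    exact: ltW.
  have h2 : (2^-1 : R) <= 1 by rewrite invf_le1 ?ler1n ?ltr0n.
  case=> /andP[h1 h3]; apply/andP; split => //.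
    exact: le_trans h3 h2.
  by apply: le_trans h1; rewrite invr_ge0 ler0n.
have h2 : (0 : R) <= 2^-1 by rewrite invr_ge0 ler0n.
apply: withinU_continuous; try exact: closed_cc.
  have := @within_comp _ _ _ [set x : R | 0 <= x <= 2^-1] I01 (fun s => 0 + 2 * s) p
    (@cont_aff 0 2).
  move=> /(_ _ cp) h; apply: (subspace_eq_continuous _ (h _)).
    by move=> s /set_mem /= /andP[s0 s1]; rewrite /from_subspace /= concat_l // add0r.
  move=> s /andP[s0 s1]; rewrite add0r; apply/andP; split.
    by apply: mulr_ge0.
  have : 2 * s <= 2 * 2^-1 by rewrite ler_pM2l ?ltr0n.
  by rewrite mulfV ?pnatr_eq0.
have := @within_comp _ _ _ [set x : R | 2^-1 <= x <= 1] I01 (fun s => -1 + 2 * s) q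
  (@cont_aff (-1) 2).
move=> /(_ _ cq) h; apply: (subspace_eq_continuous _ (h _)).
  by move=> s /set_mem /= /andP[s0 s1]; rewrite /from_subspace /= concat_r // addrC.
move=> s /andP[s0 s1]; apply/andP; split.
  have : 2 * 2^-1 <= 2 * s by rewrite ler_pM2l ?ltr0n.
  by rewrite mulfV ?pnatr_eq0 // addrC subr_ge0.
have : 2 * s <= 2 * 1 by rewrite ler_pM2l ?ltr0n.
by rewrite mulr1 addrC lerBlDr.
Qed.

Lemma tele n (a b c : nat -> G) :
  (forall k, (k < n)%N -> (a k * b k.+1 = b k * c k)%g) ->
  (prodg n a * b n = b 0%N * prodg n c)%g.
Proof.
elim: n => [_|n IH h] /=; first by rewrite mul1g mulg1.
rewrite -mulgA h // mulgA IH ?mulgA // => k kn; apply: h; exact: ltnW.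
Qed.

Lemma tn0 n : tn n 0 = 0. Proof. exact: pt0. Qed.
Lemma tnn n : (0 < n)%N -> tn n n = 1. Proof. exact: ptm. Qed.

Section Glue.
Variables (U V Y : set X) (uU uV : (R -> X) -> G).
Hypotheses (oU : open U) (oV : open V) (UV : U `|` V = setT).
Hypotheses (cU : cocycle U Y uU) (cV : cocycle V Y uV).
Hypothesis agree : forall p, is_path (U `&` V) p -> uU p = uV p.

Definition om (q : R -> X) : G :=
  if pselect (forall s, I01 s -> U (q s)) then uU q else uV q.

Lemma om_U q : is_path U q -> om q = uU q.
Proof. by case=> cq qU; rewrite /om; case: pselect. Qed.

Lemma om_V q : is_path V q -> om q = uV q.
Proof.
move=> [cq qV]; rewrite /om; case: pselect => // hU.
by apply: agree; split => // s Is; split; [apply: hU | apply: qV].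
Qed.

Lemma om_ext q1 q2 : is_path U q1 \/ is_path V q1 ->
  (forall s, I01 s -> q1 s = q2 s) -> om q1 = om q2.
Proof.
move=> [h|h] e; have h2 := is_path_ext h e.
  by rewrite !om_U //; exact: (coc_ext cU h e).
by rewrite !om_V //; exact: (coc_ext cV h e).
Qed.

Definition good (p : R -> X) (n : nat) : Prop := (0 < n)%N /\
  forall k, (k < n)%N -> (forall s, tn n k <= s <= tn n k.+1 -> U (p s)) \/
                         (forall s, tn n k <= s <= tn n k.+1 -> V (p s)).
Definition piece (p : R -> X) n k := seg (pk p) (tn n k) 0 (tn n k.+1) 0.
Definition Pn (p : R -> X) n := prodg n (fun k => om (piece p n k)).
Definition glu (p : R -> X) := Pn p (xget 1%N (good p)).

Lemma piece_path (W : set X) p n k : {within I01, continuous p} -> (k < n)%N ->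
  (forall s, tn n k <= s <= tn n k.+1 -> W (p s)) -> is_path W (piece p n k).
Proof.
move=> cp kn h; have n0 : (0 < n)%N by apply: leq_ltn_trans kn.
have /andP[? _] := tn_in n0 (ltnW kn); have /andP[_ ?] := tn_in n0 kn.
by apply: seg_pk_path => //; apply: tn_le.
Qed.

Lemma good_path p n k : {within I01, continuous p} -> good p n -> (k < n)%N ->
  is_path U (piece p n k) \/ is_path V (piece p n k).
Proof. by move=> cp [_ gn] kn; case: (gn k kn) => h; [left|right]; apply: piece_path. Qed.

Lemma good_mul p n m : good p n -> (0 < m)%N -> good p (n * m).
Proof.
move=> [n0 gn] m0; split; first by rewrite muln_gt0 n0.
move=> j jnm; set k := (j %/ m)%N; set i := (j %% m)%N.
have ej : j = (k * m + i)%N by apply: divn_eq.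
have kn : (k < n)%N by rewrite ltn_divLR.
have im : (i < m)%N by rewrite ltn_pmod.
have e1 : tn (n * m) j = pt (tn n k) (tn n k.+1) m i by rewrite tn_refine // -ej.
have e2 : tn (n * m) j.+1 = pt (tn n k) (tn n k.+1) m i.+1
  by rewrite tn_refine // addnS -ej.
have ab : tn n k <= tn n k.+1 by apply: tn_le.
have /andP[a1 _] := pt_in m0 ab (ltnW im).
have /andP[_ b2] := pt_in m0 ab im.
rewrite e1 e2; case: (gn k kn) => h; [left|right] => s /andP[s1 s2];
  apply: h; apply/andP; split; [exact: le_trans s1 | exact: le_trans b2 | exact: le_trans s1 | exact: le_trans b2].
Qed.

Lemma Pn_mul p n m : {within I01, continuous p} -> good p n -> (0 < m)%N ->
  Pn p n = Pn p (n * m).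
Proof.
move=> cp gn m0; have [n0 hn] := gn.
rewrite /Pn prodg_mul; apply: prodg_ext => k kn.
have ab : tn n k <= tn n k.+1 by apply: tn_le.
have /andP[a0 _] := tn_in n0 (ltnW kn); have /andP[_ b1] := tn_in n0 kn.
have sub : forall i, (i < m)%N -> forall s,
    pt (tn n k) (tn n k.+1) m i <= s <= pt (tn n k) (tn n k.+1) m i.+1 ->
    tn n k <= s <= tn n k.+1.
  move=> i im s /andP[s1 s2].
  have /andP[a1 _] := pt_in m0 ab (ltnW im).
  have /andP[_ b2] := pt_in m0 ab im.
  by apply/andP; split; [exact: le_trans s1 | exact: le_trans b2].
have pin : forall i, (i <= m)%N -> 0 <= pt (tn n k) (tn n k.+1) m i <= 1.
  move=> i im; have /andP[? ?] := pt_in m0 ab im.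
  by apply/andP; split; [exact: le_trans a0 _ | exact: le_trans b1].
have epc : forall i, piece p (n * m) (k * m + i) =
    seg (pk p) (pt (tn n k) (tn n k.+1) m i) 0 (pt (tn n k) (tn n k.+1) m i.+1) 0.
  by move=> i; rewrite /piece -addnS -!tn_refine.
case: (hn k kn) => h.
  rewrite om_U; last by apply: piece_path.
  rewrite (coc_subdiv cU cp m0 a0 ab b1 h); apply: prodg_ext => i im.
  have /andP[? ?] := pin i (ltnW im); have /andP[? ?] := pin i.+1 im.
  rewrite epc om_U //; apply: seg_pk_path => //; first by apply: pt_le.
  by move=> s /(sub i im) /h.
rewrite om_V; last by apply: piece_path.
rewrite (coc_subdiv cV cp m0 a0 ab b1 h); apply: prodg_ext => i im.
have /andP[? ?] := pin i (ltnW im); have /andP[? ?] := pin i.+1 im.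
rewrite epc om_V //; apply: seg_pk_path => //; first by apply: pt_le.
by move=> s /(sub i im) /h.
Qed.

Lemma glu_val p n : {within I01, continuous p} -> good p n -> glu p = Pn p n.
Proof.
move=> cp gn; have g0 : good p (xget 1%N (good p)) := xgetPex 1%N (ex_intro _ n gn).
rewrite /glu (Pn_mul cp g0 gn.1) (Pn_mul cp gn g0.1) mulnC //.
Qed.

Lemma lebesgue1 p : {within I01, continuous p} -> exists n, good p n.
Proof.
move=> cp; have cH : {within I01 `*` I01, continuous (pk p)}.
  by apply: pk_cont; rewrite ?ler01 ?lexx.
have [n [n0 hn]] := lebesgue2 oU oV UV cH.
exists n; split => // k kn.
have bx : forall s, tn n k <= s <= tn n k.+1 ->
    box (tn n k) (tn n k.+1) (tn n 0) (tn n 1) (s, tn n 0).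
  by move=> s hs; split => //=; rewrite lexx tn_le.
by case: (hn k 0%N kn n0) => h; [left|right] => s /bx /h.
Qed.

Lemma seg01 p : seg (pk p) 0 0 1 0 = p.
Proof. by apply: funext => s; rewrite /seg /pk /=; congr p; ring. Qed.

Lemma tn10 : tn 1 0 = 0. Proof. by rewrite tnE mul0r. Qed.
Lemma tn11 : tn 1 1 = 1. Proof. by rewrite tnE divr1. Qed.

Lemma glu_W p (W : set X) : (W = U \/ W = V) -> is_path W p -> glu p = om p.
Proof.
move=> hW [cp pW].
have g1 : good p 1.
  split => // k; rewrite ltnS leqn0 => /eqP ->; rewrite tn10 tn11.
  by case: hW pW => -> pW; [left|right] => s /pW.
by rewrite (glu_val cp g1) /Pn /= mul1g /piece tn10 tn11 seg01.
Qed.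

Lemma glu_U p : is_path U p -> glu p = uU p.
Proof. by move=> pU; rewrite (glu_W (or_introl erefl) pU) om_U. Qed.

Lemma glu_V p : is_path V p -> glu p = uV p.
Proof. by move=> pV; rewrite (glu_W (or_intror erefl) pV) om_V. Qed.

Lemma glu_ext p q : {within I01, continuous p} -> (forall s, I01 s -> p s = q s) ->
  glu p = glu q.
Proof.
move=> cp e; have [n gn] := lebesgue1 cp.
have cq : {within I01, continuous q}.
  by apply: (subspace_eq_continuous _ cp) => s /set_mem /e.
have [n0 hn] := gn.
have inI : forall k s, (k < n)%N -> tn n k <= s <= tn n k.+1 -> I01 s.
  move=> k s kn /andP[s1 s2]; have /andP[? _] := tn_in n0 (ltnW kn).
  have /andP[_ ?] := tn_in n0 kn.
  by apply/andP; split; [exact: le_trans s1 | exact: le_trans s2 _].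
have gq : good q n.
  split => // k kn; case: (hn k kn) => h; [left|right] => s hs;
    rewrite -e; [exact: h | exact: inI hs | exact: h | exact: inI hs].
rewrite (glu_val cp gn) (glu_val cq gq); apply: prodg_ext => k kn.
apply: om_ext; first exact: good_path.
move=> s Is; rewrite /piece /seg /pk /=; apply: e.
have ab : tn n k <= tn n k.+1 by apply: tn_le.
apply: (inI k _ kn); move/andP: Is => [s0 s1]; apply/andP; split.
  by rewrite lerDl; apply: mulr_ge0 => //; rewrite subr_ge0.
by rewrite -lerBrDl; rewrite -[X in _ <= X]mulr1; apply: ler_wpM2l => //; rewrite subr_ge0.
Qed.


Lemma tn_half N k : (0 < N)%N -> 2 * tn (N + N) k = tn N k.
Proof. by move=> N0; rewrite !tnE natrD; field; rewrite -natrD !pnatr_eq0 -!lt0n addn_gt0 N0. Qed.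

Lemma tn_half2 N j : (0 < N)%N -> 2 * tn (N + N) (N + j) - 1 = tn N j.
Proof. by move=> N0; rewrite !tnE !natrD; field; rewrite -natrD !pnatr_eq0 -!lt0n addn_gt0 N0. Qed.

Lemma tn_halfN N : (0 < N)%N -> tn (N + N) N = 2^-1.
Proof. by move=> N0; rewrite !tnE natrD; field; rewrite -natrD !pnatr_eq0 -!lt0n addn_gt0 N0. Qed.

Lemma glu_concat p q : {within I01, continuous p} -> {within I01, continuous q} ->
  p 1 = q 0 -> glu (path_concat p q) = (glu p * glu q)%g.
Proof.
move=> cp cq e.
have [n1 g1] := lebesgue1 cp; have [n2 g2] := lebesgue1 cq.
set N := (n1 * n2)%N.
have gp : good p N := good_mul g1 g2.1.
have gq : good q N by rewrite /N mulnC; apply: good_mul g2 g1.1.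
have N0 := gp.1.
set c := path_concat p q.
have cc : {within I01, continuous c} by apply: concat_cont.
have hN := tn_halfN N0.
have two0 : (0 : R) < 2 by rewrite ltr0n.
have gc : good c (N + N).
  split; first by rewrite addn_gt0 N0.
  move=> k kNN; case: (ltnP k N) => kN.
    have k1 : tn (N + N) k.+1 <= 2^-1 by rewrite -hN tn_le.
    case: (gp.2 k kN) => h; [left|right] => s /andP[s1 s2];
      (rewrite /c concat_l; last exact: le_trans s2 k1); apply: h;
      rewrite -(@tn_half N k N0) -(@tn_half N k.+1 N0); apply/andP; split; rewrite ler_pM2l //.
  have [j kj] : exists j, k = (N + j)%N by exists (k - N)%N; rewrite subnKC.
  subst k.
  move: kNN; rewrite ltn_add2l => jN.
  have k1 : 2^-1 <= tn (N + N) (N + j) by rewrite -hN tn_le // leq_addr.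
  case: (gq.2 j jN) => h; [left|right] => s /andP[s1 s2];
    (rewrite /c concat_r //; last exact: le_trans k1 s1); apply: h;
    rewrite -(@tn_half2 N j N0) -(@tn_half2 N j.+1 N0) addnS; apply/andP; split;
    rewrite lerD2r ler_pM2l //.
rewrite (glu_val cc gc) (glu_val cp gp) (glu_val cq gq) /Pn prodg_add.
congr mul.
  apply: prodg_ext => k kN; apply: esym; apply: om_ext; first exact: good_path.
  move=> s Is; rewrite /piece /seg /pk /= /c concat_l.
    by congr p; rewrite mulrDr mulrA mulrBr (@tn_half N k N0) (@tn_half N k.+1 N0).
  have k1 : tn (N + N) k.+1 <= 2^-1 by rewrite -hN tn_le.
  apply: le_trans k1; have /andP[_ ->] // := seg_in (tn_le (N + N) (leqnSn k)) Is.
apply: prodg_ext => j jN; apply: esym; apply: om_ext; first exact: good_path.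
move=> s Is; rewrite /piece /seg /pk /= /c concat_r //.
  congr q; rewrite -(@tn_half2 N j N0) -(@tn_half2 N j.+1 N0) addnS; ring.
have k1 : 2^-1 <= tn (N + N) (N + j) by rewrite -hN tn_le // leq_addr.
apply: le_trans k1 _; have /andP[-> _] // := seg_in (tn_le (N + N) (leqnSn (N + j))) Is.
Qed.


Lemma glu_hom p q : path_homotopic setT p q -> glu p = glu q.
Proof.
case=> [[cp _] [[cq _] [H [cH [_ [H0 [H1 [Hs0 Hs1]]]]]]]].
have [n [n0 hn]] := lebesgue2 oU oV UV cH.
pose r j := fun s => H (s, tn n j).
have cr : forall j, (j <= n)%N -> {within I01, continuous (r j)}.
  move=> j jn; have /andP[? ?] := tn_in n0 jn.
  have := @within_comp _ _ _ I01 (I01 `*` I01) (fun s => (s, tn n j)) H _ _ cH; apply.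
    by apply: cont_pair; [move=> x; exact: cvg_id | move=> x; exact: cvg_cst].
  by move=> s Is; split => //=; apply/andP.
have gr : forall j, (j < n)%N -> good (r j) n /\ good (r j.+1) n.
  move=> j jn; have jj : tn n j <= tn n j.+1 by apply: tn_le.
  split; split => // k kn; case: (hn k j kn jn) => h; [left|right|left|right] => s hs;
    apply: h; split => //=; rewrite ?lexx ?jj //.
have ea : forall i k, piece (r i) n k = seg H (tn n k) (tn n i) (tn n k.+1) (tn n i).
  by move=> i k; apply: funext => s; rewrite /piece /seg /pk /r /=; congr (H (_, _)); ring.
have sqin : forall k j, (k < n)%N -> (j < n)%N ->
    box (tn n k) (tn n k.+1) (tn n j) (tn n j.+1) `<=` I01 `*` I01.
  move=> k j kn jn z [/= /andP[z1 z2] /andP[z3 z4]].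
  have /andP[k0 _] := tn_in n0 (ltnW kn); have /andP[_ k1] := tn_in n0 kn.
  have /andP[j0 _] := tn_in n0 (ltnW jn); have /andP[_ j1] := tn_in n0 jn.
  split; apply/andP; split.
  - exact: le_trans k0 z1.
  - exact: le_trans z2 k1.
  - exact: le_trans j0 z3.
  - exact: le_trans z4 j1.
have vert : forall k j x, (k < n)%N -> (j < n)%N -> tn n k <= x <= tn n k.+1 ->
    (forall y, I01 y -> H (x, y) = H (x, tn n j)) ->
    om (seg H x (tn n j) x (tn n j.+1)) = 1%g.
  move=> k j x kn jn /andP[x1 x2] hx.
  have cK := continuous_subspaceW (sqin k j kn jn) cH.
  have jj : tn n j <= tn n j.+1 by apply: tn_le.
  have bx0 : box (tn n k) (tn n k.+1) (tn n j) (tn n j.+1) (x, tn n j).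
    by split; apply/andP; split.
  have bx1 : box (tn n k) (tn n k.+1) (tn n j) (tn n j.+1) (x, tn n j.+1).
    by split; apply/andP; split.
  have e : forall s, I01 s -> seg H x (tn n j) x (tn n j.+1) s = seg H x (tn n j) x (tn n j) s.
    move=> s Is; rewrite /seg subrr mul0r addr0 subrr mul0r addr0 hx //.
    have /andP[j0 _] := tn_in n0 (ltnW jn); have /andP[_ j1] := tn_in n0 jn.
    have /andP[y0 y1] := seg_in jj Is.
    by apply/andP; split; [exact: le_trans j0 y0 | exact: le_trans y1 j1].
  case: (hn k j kn jn) => h.
    have P := seg_path cK h bx0 bx1.
    by rewrite om_U // (coc_ext cU P e); apply: (coc_const cU cK h bx0).
  have P := seg_path cK h bx0 bx1.
  by rewrite om_V // (coc_ext cV P e); apply: (coc_const cV cK h bx0).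
have step : forall j, (j < n)%N -> glu (r j) = glu (r j.+1).
  move=> j jn; have [gj gj1] := gr j jn.
  rewrite (glu_val (cr j (ltnW jn)) gj) (glu_val (cr j.+1 jn) gj1) /Pn.
  rewrite (prodg_ext (g := fun k => om (seg H (tn n k) (tn n j) (tn n k.+1) (tn n j))));
    last by move=> k _; rewrite ea.
  rewrite (prodg_ext (f := fun k => om (piece (r j.+1) n k))
     (g := fun k => om (seg H (tn n k) (tn n j.+1) (tn n k.+1) (tn n j.+1))));
    last by move=> k _; rewrite ea.
  set b := fun k => om (seg H (tn n k) (tn n j) (tn n k) (tn n j.+1)).
  have b0 : b 0%N = 1%g.
    apply: (vert 0%N j) => //; first by rewrite lexx tn_le.
    have /andP[? ?] := tn_in n0 (ltnW jn).
    by move=> y Iy; rewrite tn0 Hs0 // Hs0 //; apply/andP.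
  have bn : b n = 1%g.
    have [n' en] : exists n', n = n'.+1 by exists n.-1; rewrite prednK.
    rewrite /b; have -> : tn n n = tn n n'.+1 by rewrite -en.
    apply: (vert n' j) => //; first by rewrite en.
      by rewrite tn_le ?lexx.
    have /andP[? ?] := tn_in n0 (ltnW jn).
    by move=> y Iy; rewrite -en tnn // Hs1 // Hs1 //; apply/andP.
  set a' := fun k => om (seg H (tn n k) (tn n j) (tn n k.+1) (tn n j)).
  set c' := fun k => om (seg H (tn n k) (tn n j.+1) (tn n k.+1) (tn n j.+1)).
  suff T : (prodg n a' * b n = b 0%N * prodg n c')%g.
    by apply: (@mulIg _ (b n)); rewrite T b0 bn mul1g mulg1.
  apply: tele => k kn; rewrite /a' /b /c'.
  have cK := continuous_subspaceW (sqin k j kn jn) cH.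
  have kk : tn n k <= tn n k.+1 by apply: tn_le.
  have jj : tn n j <= tn n j.+1 by apply: tn_le.
  have c00 : box (tn n k) (tn n k.+1) (tn n j) (tn n j.+1) (tn n k, tn n j).
    by split; apply/andP; split.
  have c10 : box (tn n k) (tn n k.+1) (tn n j) (tn n j.+1) (tn n k.+1, tn n j).
    by split; apply/andP; split.
  have c01 : box (tn n k) (tn n k.+1) (tn n j) (tn n j.+1) (tn n k, tn n j.+1).
    by split; apply/andP; split.
  have c11 : box (tn n k) (tn n k.+1) (tn n j) (tn n j.+1) (tn n k.+1, tn n j.+1).
    by split; apply/andP; split.
  case: (hn k j kn jn) => h.
    rewrite (om_U (seg_path cK h c00 c10)) (om_U (seg_path cK h c10 c11)).
    rewrite (om_U (seg_path cK h c00 c01)) (om_U (seg_path cK h c01 c11)).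
    exact: (coc_box cU cK h c00 c10 c11 c01).
  rewrite (om_V (seg_path cK h c00 c10)) (om_V (seg_path cK h c10 c11)).
  rewrite (om_V (seg_path cK h c00 c01)) (om_V (seg_path cK h c01 c11)).
  exact: (coc_box cV cK h c00 c10 c11 c01).
have e0 : glu p = glu (r 0%N).
  by apply: glu_ext => // s Is; rewrite /r tn0 H0.
have e1 : glu (r n) = glu q.
  by apply: glu_ext; [apply: cr | move=> s Is; rewrite /r tnn // H1].
rewrite e0 -e1.
suff : forall j, (j <= n)%N -> glu (r 0%N) = glu (r j) by apply.
elim=> [//|j IH jn]; rewrite IH; [exact: step | exact: ltnW].
Qed.

Lemma glu_cocycle : Y `<=` U -> cocycle setT Y glu.
Proof.
move=> YU; split.
  move=> p [cp pY]; have [c1 _] := cU.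
  rewrite glu_U; last by split => // s /pY [_ /YU].
  by apply: c1; split => // s /pY [_ y]; split => //; apply: YU.
split; first by move=> p q; apply: glu_hom.
by move=> p q [cp _] [cq _] e; apply: glu_concat.
Qed.

End Glue.

Lemma I01_0 : I01 (0 : R). Proof. by rewrite /= lexx ler01. Qed.
Lemma I01_1 : I01 (1 : R). Proof. by rewrite /= lexx ler01. Qed.

Lemma is_path_mono (W W' : set X) (p : R -> X) : W `<=` W' -> is_path W p -> is_path W' p.
Proof. by move=> WW [cp pW]; split => // s /pW /WW. Qed.

Lemma homot_mono (W W' : set X) (p q : R -> X) : W `<=` W' ->
  path_homotopic W p q -> path_homotopic W' p q.
Proof.
move=> WW [pp [pq [H [cH [HW rest]]]]]; split; first exact: is_path_mono pp.
split; first exact: is_path_mono pq.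
by exists H; split => //; split => // z /HW /WW.
Qed.

Lemma coc_mono (W W' Y Y' : set X) (u : (R -> X) -> G) : W `<=` W' ->
  W `&` Y `<=` W' `&` Y' -> cocycle W' Y' u -> cocycle W Y u.
Proof.
move=> WW WY [c1 [c2 c3]]; split; first by move=> p pY; apply: c1; apply: is_path_mono pY.
split; first by move=> p q h; apply: c2; apply: homot_mono h.
by move=> p q pp pq e; apply: c3 => //; apply: is_path_mono WW _.
Qed.

Lemma cohom_mono (W W' Y Y' : set X) (u v : (R -> X) -> G) : W `<=` W' ->
  W `&` Y `<=` W' `&` Y' -> cohomologous W' Y' u v -> cohomologous W Y u v.
Proof.
move=> WW WY [c [c0 h]]; exists c; split.
  by move=> x Wx Yx; have [? ?] := WY x (conj Wx Yx); apply: c0.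
by move=> p pW; apply: h; apply: is_path_mono pW.
Qed.

Lemma const_path (W : set X) x : W x -> is_path W (fun _ : R => x).
Proof. by move=> Wx; split => //; apply: continuous_subspaceT; apply: cst_continuous. Qed.

Lemma homot_ends (W : set X) (p q : R -> X) : path_homotopic W p q -> p 0 = q 0 /\ p 1 = q 1.
Proof.
case=> _ [_ [H [_ [_ [H0 [H1 [Hs0 Hs1]]]]]]].
have I0 := I01_0; have I1 := I01_1.
by split; [rewrite -H1 // Hs0 | rewrite -H1 // Hs1].
Qed.

Lemma tele2 n (f g d : nat -> G) :
  (forall k, (k < n)%N -> f k = (d k * g k * (d k.+1)^-1)%g) ->
  prodg n f = (d 0%N * prodg n g * (d n)^-1)%g.
Proof.
elim: n => [_|n IH h] /=; first by rewrite mulg1 mulgV.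
rewrite IH; last by move=> k kn; apply: h; apply: ltnW.
by rewrite h // !mulgA mulgVK.
Qed.

Lemma concat0 (p q : R -> X) : path_concat p q 0 = p 0.
Proof. by rewrite concat_l ?mulr0 // invr_ge0 ler0n. Qed.

Lemma concat1 (p q : R -> X) : p 1 = q 0 -> path_concat p q 1 = q 1.
Proof.
move=> e; rewrite concat_r //; last by rewrite invf_le1 ?ler1n ?ltr0n.
by congr q; rewrite mulr1 (_ : 2 = 1 + 1)%R // addrK.
Qed.

Lemma inj_part (U V Y : set X) (u v : (R -> X) -> G) (cu cv : X -> G) :
  open U -> open V -> U `|` V = setT -> Y `<=` U ->
  cocycle setT Y u -> cocycle setT Y v ->
  cochain0 U Y cu -> (forall p, is_path U p -> v p = mul (mul (cu (p 0)) (u p)) (inv (cu (p 1)))) ->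
  (forall p, is_path V p -> v p = mul (mul (cv (p 0)) (u p)) (inv (cv (p 1)))) ->
  (forall x, U x -> V x -> cu x = cv x) ->
  cohomologous setT Y u v.
Proof.
move=> oU oV UV YU cu_ cv_ c0U hU hV key.
pose c := fun x => if pselect (U x) then cu x else cv x.
have cU : forall x, U x -> c x = cu x by move=> x Ux; rewrite /c; case: pselect.
have cV : forall x, V x -> c x = cv x.
  by move=> x Vx; rewrite /c; case: pselect => // Ux; apply: key.
exists c; split.
  by move=> x _ Yx; have Ux := YU x Yx; rewrite cU //; exact: (c0U x Ux Yx).
move=> p [cp _]; have [n gn] := lebesgue1 oU oV UV cp.
have n0 := gn.1.
have ep : forall w : (R -> X) -> G, cocycle setT Y w ->
    w p = prodg n (fun k => w (piece p n k)).
  move=> w cw; have := coc_subdiv cw cp n0 (lexx 0) ler01 (lexx 1) (fun _ _ => I).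
  by rewrite seg01.
rewrite (ep v cv_) (ep u cu_).
rewrite (@tele2 n (fun k => v (piece p n k)) (fun k => u (piece p n k)) (fun k => c (p (tn n k)))) /= ?tn0 ?tnn //.
move=> k kn.
have e0 : piece p n k 0 = p (tn n k) by rewrite /piece /seg /pk /= mulr0 addr0.
have e1 : piece p n k 1 = p (tn n k.+1) by rewrite /piece /seg /pk /=; congr p; ring.
have I0 := I01_0; have I1 := I01_1.
case: (good_path cp gn kn) => h.
  have U0 : U (p (tn n k)) by rewrite -e0; apply: h.2.
  have U1 : U (p (tn n k.+1)) by rewrite -e1; apply: h.2.
  by rewrite hU // e0 e1 !cU.
have V0 : V (p (tn n k)) by rewrite -e0; apply: h.2.
have V1 : V (p (tn n k.+1)) by rewrite -e1; apply: h.2.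
by rewrite hV // e0 e1 !cV.
Qed.

Lemma surj_part (U V Y : set X) (uU uV : (R -> X) -> G) (c0 : X -> G) :
  open U -> open V -> U `|` V = setT -> Y `<=` U `&` V ->
  cocycle U Y uU -> cocycle V Y uV -> cochain0 (U `&` V) Y c0 ->
  (forall p, is_path (U `&` V) p -> uV p = mul (mul (c0 (p 0)) (uU p)) (inv (c0 (p 1)))) ->
  exists u, cocycle setT Y u /\ cohomologous U Y u uU /\ cohomologous V Y u uV.
Proof.
move=> oU oV UV YUV cU cV cc hc.
pose uV' := fun p : R -> X => mul (mul (inv (c0 (p 0))) (uV p)) (c0 (p 1)).
have I0 := I01_0; have I1 := I01_1.
have cV' : cocycle V Y uV'.
  have [v1 [v2 v3]] := cV.
  split.
    move=> p pY; have [_ h] := pY.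
    have [_ Yp0] := h 0 I0; have [_ Yp1] := h 1 I1.
    rewrite /uV' v1 // (cc _ (YUV _ Yp0) Yp0) (cc _ (YUV _ Yp1) Yp1).
    by rewrite invg1 !mulg1.
  split.
    by move=> p q h; have [e0 e1] := homot_ends h; rewrite /uV' (v2 _ _ h) e0 e1.
  move=> p q pp pq e; rewrite /uV' v3 // concat0 concat1 // -e.
  by rewrite !mulgA mulgK.
have agree : forall p, is_path (U `&` V) p -> uU p = uV' p.
  by move=> p pUV; rewrite /uV' hc // !mulgA mulVg mul1g mulgVK.
have YU : Y `<=` U by move=> y /YUV [].
exists (glu U V uU uV'); split; first exact: glu_cocycle.
split.
  exists (fun _ => one); split => // p pU.
  by rewrite (glu_U cU cV' agree pU) mul1g invg1 mulg1.
exists c0; split; first by move=> x Vx Yx; apply: cc => //; apply: YUV.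
by move=> p pV; rewrite (glu_V cU cV' agree pV) /uV' !mulgA mulgV mul1g mulgK.
Qed.

Section Comp.
Variables (S : set X) (n : nat) (A : 'I_n.+1 -> set X).
Hypothesis hA : path_components_of R S A.

Definition idx (x : X) : 'I_n.+1 := xget ord0 [set i | A i x].

Lemma idxP x : S x -> A (idx x) x.
Proof.
move=> Sx; have [_ [_ [_ hiff]]] := hA.
have [i [Ai _]] : exists i, A i x /\ A i x.
  by apply: (hiff x x Sx Sx).1; exists (fun _ => x); split => //; apply: const_path.
by have := @xgetPex _ (@ord0 n) [set i | A i x] (ex_intro _ i Ai); exact.
Qed.

Lemma comp_uniq i j x : A i x -> A j x -> i = j.
Proof.
move=> Ai Aj; have [_ [_ [hd _]]] := hA.
case: (eqVneq i j) => // /hd; rewrite -subset0 => /(_ x) h; exfalso; exact: h.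
Qed.

Lemma idx_eq i x : A i x -> idx x = i.
Proof. by move=> Ai; have [hs _] := hA; apply: comp_uniq (idxP (hs i x Ai)) Ai. Qed.

Lemma path_comp (p : R -> X) : is_path S p -> is_path (A (idx (p 0))) p.
Proof.
move=> [cp pS]; split => // s Is.
have [_ [_ [_ hiff]]] := hA.
have I0 := I01_0.
have [j [Aj0 Ajs]] : exists j, A j (p 0) /\ A j (p s).
  apply: (hiff _ _ (pS 0 I0) (pS s Is)).1.
  move: Is => /andP[s0 s1].
  exists (seg (pk p) 0 0 s 0); split.
    apply: seg_pk_path => // t /andP[t0 ts]; apply: pS; apply/andP; split => //.
    exact: le_trans ts s1.
  by split; rewrite /seg /pk /=; congr p; ring.
by rewrite (idx_eq Aj0).
Qed.

Variable a : 'I_n.+1 -> X.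
Hypothesis ha : forall i, A i (a i).

Lemma part5a (w w' : (R -> X) -> G) :
  (forall i, cohomologous (A i) [set a i] w w') -> cohomologous S (range a) w w'.
Proof.
move=> h; have [cs hcs] := choice h.
exists (fun x => cs (idx x) x); split.
  move=> x Sx [j _ <-]; rewrite (idx_eq (ha j)).
  by have [c0 _] := hcs j; apply: c0.
move=> p pS; have pA := path_comp pS.
have [_ hrel] := hcs (idx (p 0)).
by rewrite hrel // (idx_eq (pA.2 1 I01_1)).
Qed.

Lemma part5b (ws : 'I_n.+1 -> (R -> X) -> G) :
  (forall i, cocycle (A i) [set a i] (ws i)) ->
  exists w, cocycle S (range a) w /\ forall i, cohomologous (A i) [set a i] w (ws i).
Proof.
move=> hws; have I0 := I01_0; have I1 := I01_1.
have [hs [_ [_ hiff]]] := hA.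
exists (fun p => ws (idx (p 0)) p); split.
  split.
    move=> p [cp pSY].
    have pS : is_path S p by split => // s /pSY [].
    have pA := path_comp pS.
    have [c1 _] := hws (idx (p 0)); apply: c1; split => // s Is.
    split; first exact: pA.2 s Is.
    have [_ [j _ ej]] := pSY s Is.
    have Aj : A j (p s) by rewrite -ej.
    by rewrite /= -ej (comp_uniq (pA.2 s Is) Aj).
  split.
    move=> p q h; have [e0 _] := homot_ends h; rewrite -e0.
    have [_ [c2 _]] := hws (idx (p 0)); apply: c2.
    case: h => pp [pq [H [cH [HS rest]]]].
    split; first exact: path_comp.
    split; first by rewrite e0; exact: path_comp.
    exists H; split => //; split => //.
    move=> [z1 z2] [/= /andP[z10 z11] /andP[z20 z21]].
    have [j [Aj0 Ajz]] : exists j, A j (p 0) /\ A j (H (z1, z2)).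
      have [H0 _] := rest.
      have SH : S (H (z1, z2)) by apply: HS; split; apply/andP.
      apply: (hiff _ _ (pp.2 0 I0) SH).1.
      exists (seg H 0 0 z1 z2); split.
        apply: (@seg_path _ 0 1 0 1) => //.
        - by split; apply/andP; split; rewrite ?lexx ?ler01.
      split; last by rewrite /seg; congr (H (_, _)); ring.
      by rewrite /seg -(H0 0 I0); congr (H (_, _)); ring.
    by rewrite (idx_eq Aj0).
  move=> p q pp pq e; rewrite concat0.
  have pA := path_comp pp.
  have qA := path_comp pq.
  have eq0 : idx (q 0) = idx (p 0) by apply: idx_eq; rewrite -e; apply: pA.2.
  rewrite eq0 in qA.
  have [_ [_ c3]] := hws (idx (p 0)); rewrite c3 //.
  by rewrite eq0.
move=> i; exists (fun _ => one); split => // p pA.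
by rewrite mul1g invg1 mulg1 (idx_eq (pA.2 0 I0)).
Qed.

End Comp.
End Main.

Unset Implicit Arguments.

Theorem theorem6p8 (R : realType) (X : topologicalType) (G : groupType)
    (U V : set X) (m : nat) (A : 'I_m.+1 -> set X) (a : 'I_m.+1 -> X) :
  open U -> open V -> path_connected R U -> path_connected R V ->
  U `|` V = setT -> (1 <= m)%N ->
  path_components_of R (U `&` V) A -> (forall i, A i (a i)) ->
  let Y := range a in
  let UV := U `&` V in
  [/\
   (* the restriction maps r_U, r_V, r_{U cap V}, r_{A_i} are well defined *)
   (forall u v : (R -> X) -> G,
      (cocycle setT Y u -> cocycle U Y u /\ cocycle V Y u) /\
      (cohomologous setT Y u v -> cohomologous U Y u v /\ cohomologous V Y u v) /\
      (cocycle U Y u -> cocycle UV Y u) /\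
      (cohomologous U Y u v -> cohomologous UV Y u v) /\
      (cocycle V Y u -> cocycle UV Y u) /\
      (cohomologous V Y u v -> cohomologous UV Y u v) /\
      (forall i, cocycle UV Y u -> cocycle (A i) [set a i] u) /\
      (forall i, cohomologous UV Y u v -> cohomologous (A i) [set a i] u v)),
   (* commutativity: r_{UV} (r_U [u]) = r_{UV} (r_V [u]) *)
   (forall u : (R -> X) -> G, cocycle setT Y u -> cohomologous UV Y u u),
   (* (r_U, r_V) is injective on H^1(X,Y) *)
   (forall u v : (R -> X) -> G, cocycle setT Y u -> cocycle setT Y v ->
      cohomologous U Y u v -> cohomologous V Y u v ->
      cohomologous setT Y u v),
   (* (r_U, r_V) maps onto the fibered product over H^1(U cap V, Y) *)
   (forall uU uV : (R -> X) -> G, cocycle U Y uU -> cocycle V Y uV ->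
      cohomologous UV Y uU uV ->
      exists u : (R -> X) -> G, cocycle setT Y u /\
        cohomologous U Y u uU /\ cohomologous V Y u uV) &
   (* restriction to the components: H^1(U cap V, Y) ~= prod_i H^1(A_i, a_i) *)
   ((forall w w' : (R -> X) -> G, cocycle UV Y w -> cocycle UV Y w' ->
       (forall i, cohomologous (A i) [set a i] w w') ->
       cohomologous UV Y w w') /\
    (forall ws : 'I_m.+1 -> (R -> X) -> G,
       (forall i, cocycle (A i) [set a i] (ws i)) ->
       exists w : (R -> X) -> G, cocycle UV Y w /\
         forall i, cohomologous (A i) [set a i] w (ws i)))].
Proof.
move=> oU oV pcU pcV UV m1 hA ha Y W.
have [hs [_ [_ hiff]]] := hA.
have YW : Y `<=` U `&` V by move=> y [i _ <-]; exact: hs i _ (ha i).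
have YU : Y `<=` U by move=> y /YW [].
have WU : W `<=` U by move=> x [].
have WV : W `<=` V by move=> x [].
split.
- move=> u v.
  split.
    move=> cu; split; (apply: coc_mono cu; [by [] | by move=> x [? ?]]).
  split.
    move=> cu; split; (apply: cohom_mono cu; [by [] | by move=> x [? ?]]).
  split.
    by move=> cu; apply: coc_mono cu => // x [[? ?] ?].
  split.
    by move=> cu; apply: cohom_mono cu => // x [[? ?] ?].
  split.
    by move=> cu; apply: coc_mono cu => // x [[? ?] ?].
  split.
    by move=> cu; apply: cohom_mono cu => // x [[? ?] ?].
  split.
    move=> i cu; apply: coc_mono cu; first exact: hs.
    by move=> x [Ax ->]; split; [exact: hs | exists i].
  move=> i cu; apply: cohom_mono cu; first exact: hs.
  by move=> x [Ax ->]; split; [exact: hs | exists i].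
- move=> u _; exists (fun _ => one); split => // p _.
  by rewrite mul1g invg1 mulg1.
- move=> u v cu cv [cu0 [hcU hU]] [cv0 [hcV hV]].
  apply: (inj_part oU oV UV YU cu cv hcU hU hV).
  move=> x Ux Vx.
  have Wx : W x by split.
  have Ai := idxP hA Wx.
  set i := idx A x in Ai.
  have Wa : W (a i) by apply: hs; apply: ha.
  have Ya : Y (a i) by exists i.
  have [g [gW [g0 g1]]] := (hiff (a i) x Wa Wx).2 (ex_intro _ i (conj (ha i) Ai)).
  have e1 := hU g (is_path_mono WU gW).
  have e2 := hV g (is_path_mono WV gW).
  rewrite g0 g1 (hcU (a i) (YU _ Ya) Ya) mul1g in e1.
  rewrite g0 g1 (hcV (a i) (YW _ Ya).2 Ya) mul1g in e2.
  by apply: invg_inj; apply: (mulgI (u g)); rewrite -e1 -e2.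
- move=> uU uV cU cV [c0 [hc0 hc]].
  exact: (surj_part oU oV UV YW cU cV hc0 hc).
- split.
    by move=> w w' _ _ h; exact: (part5a hA ha h).
  by move=> ws hws; exact: (part5b hA ha hws).
Qed.
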